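(* Let $m$ be a positive integer. For every integer $n$ with $\frac{3^{m-1}+1}{2}\le n\le \frac{3^{m-1}+1}{2}+3^{m-2}$, $$t(n)=\sum_{R=\lceil \frac{n-1}{3}\rceil}^{\lfloor\frac{2n+3^{m-2}-1}{4}\rfloor} t(R)\;-\;\sum_{R=\lceil\frac{3n+2}{5}\rceil}^{\lfloor\frac{2n+3^{m-2}-1}{4}\rfloor}\ \sum_{S=\lceil\frac{R-1}{3}\rceil}^{2R-n-1} t(S),$$ and for every integer $n$ with $\frac{3^{m-1}+1}{2}+3^{m-2}+1\le n\le\frac{3^m-1}{2}$, $$t(n)=\sum_{R=\lceil\frac{n-1}{3}\rceil}^{\frac{3^{m-1}-1}{2}} t(R).$$ (Empty sums are $0$.)
   Context: A weighing partition of a positive integer $n$ is a multiset of positive integers summing to $n$ such that every integer $\ell$ with $1\le\ell\le n$ can be written as $\sum_j u_jw_j$ with $u_j\in\{-1,0,1\}$ (weighing on a two-pan balance with weights on both pans). A feasible partition of $n$ is a weighing partition of $n$ whose number of parts is minimal among all weighing partitions of $n$. For a positive integer $n$, $t(n)$ denotes the number of feasible partitions of $n$ (as multisets), and by convention $t(0)=1$. *)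

(* Defs.v *)
From mathcomp Require Import all_boot all_order all_algebra.
From mathcomp Require Import boolp.
Set Implicit Arguments. Unset Strict Implicit. Unset Printing Implicit Defensive.
Import Order.TTheory GRing.Theory Num.Theory.

Local Open Scope ring_scope.

Definition weighable (w : seq nat) (l : int) : Prop :=
  exists u : seq int,
    size u = size w /\ all (fun c => c \in [:: -1; 0; 1]) u /\
    l = \sum_(j < size w) u`_j * (nth 0%N w j)%:Z.

(* A multiset is represented by any list of its elements (order irrelevant). *)
Definition weighing_partition (n : nat) (w : seq nat) : Prop :=
  [/\ sumn w = n, all (fun x => 0 < x)%N w &
      forall l : nat, (1 <= l <= n)%N -> weighable w l%:Z].

Definition feasible_partition (n : nat) (w : seq nat) : Prop :=
  weighing_partition n w /\
  forall w' : seq nat, weighing_partition n w' -> (size w <= size w')%N.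

(* Multisets of positive integers <= n with multiplicities <= n, encoded by
   their multiplicity function: f i = multiplicity of the value i+1.  Every
   multiset summing to n is encoded exactly once. *)
Definition parts_of (n : nat) (f : {ffun 'I_n -> 'I_n.+1}) : seq nat :=
  flatten [seq nseq (f i) (i.+1) | i <- enum 'I_n].

(* t n = number of feasible partitions of n (as multisets); t 0 = 1
   automatically (the empty multiset). *)
Definition t (n : nat) : nat :=
  #|[set f : {ffun 'I_n -> 'I_n.+1} | `[< feasible_partition n (parts_of f) >] ]|.

Definition sumZ (a b : int) (F : nat -> nat) : nat :=
  \sum_(0 <= k < (absz b).+1 | (a <= k%:Z) && (k%:Z <= b)) F k.

(* Main.v *)
Require Import Defs.
From mathcomp Require Import all_boot all_order all_algebra boolp.
From mathcomp Require Import zify ring lra.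
Import Order.TTheory GRing.Theory Num.Theory.
Set Implicit Arguments. Unset Strict Implicit. Unset Printing Implicit Defensive.

Local Open Scope ring_scope.

Fixpoint wb (w : seq nat) (l : int) : Prop :=
  match w with
  | [::] => l = 0
  | x :: r => exists c : int, c \in [:: -1; 0; 1] /\ wb r (l - c * x%:Z)
  end.

Lemma weighable_wb w l : weighable w l <-> wb w l.
Proof.
elim: w l => [|x w IH] l /=.
  split.
    case=> u [hs [_ ->]]; by rewrite big_ord0.
  move=> ->; exists [::]; split => //; split => //; by rewrite big_ord0.
split.
  case=> [[|c u] [//= hs [/andP [hc hu] hl]]].
  exists c; split => //; apply/IH; exists u; split; first by case: hs.
  split => //. rewrite hl big_ord_recl /=. by rewrite addrC addKr.
case=> c [hc /IH [u [hs [hu hl]]]].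
exists (c :: u); split; first by rewrite /= hs.
split; first by rewrite /= hc hu.
rewrite big_ord_recl /=. rewrite -hl. by rewrite addrC subrK.
Qed.

Lemma wb0 w : wb w 0.
Proof. elim: w => [|x w IH] //=; exists 0; split => //; by rewrite mul0r subr0. Qed.

Lemma wbN w l : wb w l -> wb w (- l).
Proof.
elim: w l => [|x w IH] l /=; first by move->; rewrite oppr0.
case=> c [hc h]; exists (- c); split.
  by move: hc; rewrite !inE => /or3P [] /eqP ->; rewrite ?eqxx ?orbT.
have := IH _ h; by rewrite opprB mulNr opprK addrC.
Qed.

Lemma wb_bound w l : wb w l -> - (sumn w)%:Z <= l <= (sumn w)%:Z.
Proof.
elim: w l => [|x w IH] l /=; first by move->.
case=> c [hc /IH]; move: hc; rewrite !inE => /or3P [] /eqP -> /andP [h1 h2];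
  rewrite PoszD; apply/andP; split; lia.
Qed.

Lemma wb_cover r x : (forall l, - (sumn r)%:Z <= l <= (sumn r)%:Z -> wb r l) ->
  (x <= 2 * sumn r + 1)%N ->
  forall l, - (sumn (x :: r))%:Z <= l <= (sumn (x :: r))%:Z -> wb (x :: r) l.
Proof.
move=> H hx l /= /andP [h1 h2].
case: (ltrP (sumn r)%:Z l) => h3.
  exists 1; split => //; apply: H; rewrite mul1r; apply/andP; split; lia.
case: (ltrP l (- (sumn r)%:Z)) => h4.
  exists (-1); split => //; apply: H; rewrite mulN1r opprK; apply/andP; split; lia.
exists 0; split => //; apply: H; rewrite mul0r subr0; by apply/andP.
Qed.

Lemma wb_rem x w l : x \in w -> (wb w l <-> wb (x :: rem x w) l).
Proof.
elim: w l => [|y w IH] l //=.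
rewrite inE; case: (eqVneq x y) => [<- _|ne /= hx'].
  rewrite /=. exact: iff_refl.
rewrite /=.
split.
  case=> c [hc /(IH _ hx') [d [hd h]]].
  exists d; split => //; exists c; split => //.
  by have -> : l - d * x%:Z - c * y%:Z = l - c * y%:Z - d * x%:Z by ring.
case=> d [hd [c [hc h]]]; exists c; split => //; apply/(IH _ hx').
exists d; split => //.
by have -> : l - c * y%:Z - d * x%:Z = l - d * x%:Z - c * y%:Z by ring.
Qed.

Lemma wb_perm w w' l : perm_eq w w' -> wb w l -> wb w' l.
Proof.
elim: w w' l => [|x w IH] w' l.
  by rewrite perm_sym => /perm_nilP ->.
move=> hp.
have hx : x \in w' by rewrite -(perm_mem hp) mem_head.
move=> /= [c [hc h]]; apply/(wb_rem _ hx); exists c; split => //.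
apply: IH h; by rewrite -(perm_cons x) (perm_trans hp) // perm_to_rem.
Qed.

Definition T (x : nat) (w : seq nat) := sumn [seq y <- w | (y < x)%N].

Lemma wb_key x w l : wb w l ->
  (x%:Z <= (sumn w)%:Z - l) \/ ((sumn w)%:Z - l <= 2 * (T x w)%:Z).
Proof.
rewrite /T; elim: w l => [|y w IH] l /=; first by move->; right.
case=> c [hc h]; have hb := wb_bound h; case: (IH _ h) => h'.
  left; move: hc; rewrite !inE => /or3P [] /eqP cE; subst c; rewrite PoszD; lia.
case: (ltnP y x) => hyx /=.
  right; move: hc; rewrite !inE => /or3P [] /eqP cE; subst c; rewrite !PoszD; lia.
move: hc; rewrite !inE => /or3P [] /eqP cE; subst c.
- left; rewrite PoszD; lia.
- left; rewrite PoszD; lia.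
- right; rewrite PoszD; lia.
Qed.

Local Open Scope ring_scope.

Definition WP (w : seq nat) := forall l : int, - (sumn w)%:Z <= l <= (sumn w)%:Z -> wb w l.

Lemma WP_weighing n w : weighing_partition n w <-> [/\ sumn w = n, all (fun x => 0 < x)%N w & WP w].
Proof.
split.
  case=> hs hp hl; split => // l /andP [h1 h2].
  case: (ltrP 0 l) => h3.
    case: l h1 h2 h3 => [k|k] // h1 h2 h3; apply/weighable_wb; apply: hl; rewrite -hs; lia.
  case: (ltrP l 0) => h4; last first.
    have -> : l = 0 by lia.
    exact: wb0.
  rewrite -[l]opprK; apply: wbN.
  have : exists k : nat, - l = k%:Z by exists `|l|%N; lia.
  case=> k hk; rewrite hk; apply/weighable_wb; apply: hl; rewrite -hs; lia.
case=> hs hp hw; split => // l hl; apply/weighable_wb; apply: hw; rewrite hs; lia.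
Qed.

Fixpoint Srt (s : seq nat) : bool :=
  if s is x :: r then Srt r && (x <= 2 * sumn r + 1)%N else true.

Fixpoint Dec (b : nat) (s : seq nat) : bool :=
  if s is x :: r then [&& (0 < x)%N, (x <= b)%N & Dec x r] else true.

Lemma Srt_WP s : Srt s -> WP s.
Proof.
elim: s => [|x r IH] /=.
  move=> _ l /= h; lia.
case/andP => /IH h hx; exact: wb_cover.
Qed.

Lemma T_le x w : (T x w <= sumn w)%N.
Proof. rewrite /T; elim: w => //= y w IH; case: ifP => _ /=; lia. Qed.

Lemma T_mem x w : x \in w -> (T x w + x <= sumn w)%N.
Proof.
rewrite /T; elim: w => //= y w IH; rewrite inE; case: (eqVneq x y) => [<- _|_ /= /IH h].
  rewrite ltnn /=; have := T_le x w; rewrite /T; lia.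
case: ifP => _ /=; lia.
Qed.

Definition Cp (s : seq nat) := all (fun x => x <= 2 * T x s + 1)%N s.

Lemma WP_Cp s : WP s -> Cp s.
Proof.
move=> hw; apply/allP => x hx; rewrite leqNgt; apply/negP => hlt.
have hm := T_mem hx.
have hl : - (sumn s)%:Z <= (sumn s)%:Z - 2 * (T x s)%:Z - 1 <= (sumn s)%:Z.
  apply/andP; split; lia.
case: (wb_key x (hw _ hl)) => h; lia.
Qed.

Lemma Dec_le b s y : Dec b s -> y \in s -> (y <= b)%N.
Proof.
elim: s b => //= x r IH b /and3P [h0 h1 h2]; rewrite inE => /orP [/eqP -> //|].
move/(IH _ h2); lia.
Qed.

Lemma Dec_pos b s : Dec b s -> all (fun x => 0 < x)%N s.
Proof. elim: s b => //= x r IH b /and3P [-> _ /IH] //. Qed.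

Lemma Dec_Srt b s : Dec b s -> Cp s -> Srt s.
Proof.
elim: s b => //= x r IH b /and3P [h0 h1 h2] /andP [hx hr].
have hCr : Cp r.
  apply/allP => y hy; have := allP hr y hy; rewrite /T /=.
  have := Dec_le h2 hy; case: ltnP => //; lia.
rewrite (IH _ h2 hCr) /=; move: hx; rewrite /T /= ltnn.
have := T_le x r; rewrite /T; lia.
Qed.

Lemma WP_Srt b s : Dec b s -> WP s -> Srt s.
Proof. by move=> hd /WP_Cp; apply: Dec_Srt hd. Qed.

Lemma Srt_bound s : Srt s -> (2 * sumn s + 1 <= 3 ^ size s)%N.
Proof.
elim: s => //= x r IH /andP [/IH h hx]; rewrite expnS; lia.
Qed.

Lemma Srt_head x r : Srt (x :: r) -> (3 * x <= 2 * sumn (x :: r) + 1)%N.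
Proof. move=> /= /andP [_ h]; lia. Qed.

Fixpoint geo (k : nat) : seq nat := if k is k'.+1 then (3 ^ k')%N :: geo k' else [::].

Lemma geo_sum k : (2 * sumn (geo k) + 1 = 3 ^ k)%N.
Proof. elim: k => //= k IH; rewrite expnS; lia. Qed.

Lemma geo_Srt k : Srt (geo k).
Proof. elim: k => //= k ->; have := geo_sum k; lia. Qed.

Lemma geo_size k : size (geo k) = k.
Proof. by elim: k => //= k ->. Qed.

Lemma geo_pos k : all (fun x => 0 < x)%N (geo k).
Proof. elim: k => //= k ->; by rewrite expn_gt0. Qed.

Definition rng n k := (3 ^ k < 3 * (2 * n + 1))%N && (2 * n + 1 <= 3 ^ k)%N.

Lemma witness n k : rng n k -> exists w, [/\ sumn w = n, all (fun x => 0 < x)%N w, WP w & size w = k].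
Proof.
case/andP; case: k => [|k] h1 h2.
  exists [::]; split => //; first by move: h2; rewrite /= expn0; lia.
  move=> l /= h; lia.
have hg := geo_sum k; move: h1 h2; rewrite expnS => h1 h2.
exists ((n - sumn (geo k))%N :: geo k); split.
- rewrite /=; lia.
- rewrite /= geo_pos andbT; lia.
- apply: Srt_WP; rewrite /= geo_Srt /=; lia.
- by rewrite /= geo_size.
Qed.

Local Open Scope ring_scope.

Lemma WP_perm w w' : perm_eq w w' -> WP w -> WP w'.
Proof.
move=> hp hw l; rewrite -(perm_sumn hp) => hl; exact: (wb_perm hp (hw _ hl)).
Qed.

Lemma weighing_perm n w w' : perm_eq w w' -> weighing_partition n w -> weighing_partition n w'.
Proof.
move=> hp /WP_weighing [hs ha hw]; apply/WP_weighing; split.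
- by rewrite -(perm_sumn hp).
- by rewrite -(perm_all _ hp).
- exact: WP_perm hw.
Qed.

Lemma feas_perm n w w' : perm_eq w w' -> feasible_partition n w -> feasible_partition n w'.
Proof.
move=> hp [hw hm]; split; first exact: weighing_perm hw.
move=> w'' /hm; by rewrite (perm_size hp).
Qed.

Lemma mem_le_sumn (w : seq nat) x : x \in w -> (x <= sumn w)%N.
Proof. elim: w => //= y w IH; rewrite inE => /orP [/eqP ->|/IH]; lia. Qed.

Lemma geq_trans : transitive geq.
Proof. move=> a b c /=; lia. Qed.
Lemma geq_tot : total geq.
Proof. move=> a b /=; lia. Qed.
Lemma geq_anti : antisymmetric geq.
Proof. move=> a b /=; lia. Qed.

Lemma Dec_path b s : Dec b s = path geq b s && all (fun x => 0 < x)%N s.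
Proof.
elim: s b => //= x r IH b; rewrite IH; case: (0 < x)%N; case: (x <= b)%N;
  by rewrite ?andbF ?andbT.
Qed.

Lemma sort_Dec n w : all (fun x => 0 < x)%N w -> sumn w = n -> Dec n (sort geq w).
Proof.
move=> ha hs; rewrite Dec_path (perm_all _ (permEl (perm_sort _ _))) ha andbT.
rewrite path_sortedE; last exact: geq_trans.
rewrite sort_sorted ?andbT; last exact: geq_tot.
rewrite (perm_all _ (permEl (perm_sort _ _))); apply/allP => x hx /=.
rewrite -hs; exact: mem_le_sumn.
Qed.

Lemma feas_iff n k s : rng n k -> Dec n s -> sumn s = n ->
  (feasible_partition n s <-> Srt s && (size s == k)).
Proof.
move=> hr hd hs; have hr' := hr; case/andP: hr' => h1 h2.
split.
  case=> /WP_weighing [_ ha hw] hm.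
  have hS := WP_Srt hd hw; rewrite hS /=.
  case: (witness hr) => w [w1 w2 w3 w4].
  have : (size s <= k)%N.
    rewrite -w4; apply: hm; by apply/WP_weighing.
  have := Srt_bound hS; rewrite hs => hb hsk.
  have : (3 ^ k < 3 ^ (size s).+1)%N by rewrite expnS; lia.
  rewrite ltn_exp2l // => hk; apply/eqP; lia.
case/andP => hS /eqP hk; split.
  apply/WP_weighing; split => //; [exact: Dec_pos hd| exact: Srt_WP].
move=> w' /WP_weighing [hs' ha' hw'].
have hp := permEl (perm_sort geq w').
have hd' := sort_Dec ha' hs'.
have hW : WP (sort geq w') by apply: (@WP_perm w'); rewrite // perm_sym.
have hS' := WP_Srt hd' hW.
have := Srt_bound hS'; rewrite (perm_sumn hp) hs' (perm_size hp) => hb.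
have : (3 ^ k < 3 ^ (size w').+1)%N by rewrite expnS; move: (3 ^ k)%N (3 ^ size w')%N h1 hb => a b; lia.
rewrite ltn_exp2l // hk; lia.
Qed.

Local Close Scope ring_scope.

Fixpoint decf (fuel n b : nat) : seq (seq nat) :=
  match n with
  | 0 => [:: [::]]
  | _.+1 => if fuel is f.+1 then
              flatten [seq [seq M :: s | s <- decf f (n - M) M] | M <- iota 1 (minn b n)]
            else [::]
  end.

Lemma Dec_sum0 b s : Dec b s -> sumn s = 0 -> s = [::].
Proof. case: s => //= x r /and3P [h _ _]; lia. Qed.

Lemma decf_spec fuel n b s : n <= fuel -> (s \in decf fuel n b) = Dec b s && (sumn s == n).
Proof.
elim: fuel n b s => [|f IH] [|n] b s //= hn.
- rewrite inE; apply/eqP/andP => [->|[h1 /eqP h2]] //; exact: Dec_sum0 h1 h2.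
- rewrite inE; apply/eqP/andP => [->|[h1 /eqP h2]] //; exact: Dec_sum0 h1 h2.
apply/flattenP/andP.
  case=> l /mapP [M hM ->] /mapP [s' hs' ->].
  move: hM; rewrite mem_iota => hM.
  move: hs'; rewrite IH; last by lia.
  case/andP => h1 /eqP h2; split; last by apply/eqP => /=; lia.
  rewrite /= h1 andbT; apply/andP; split; lia.
case: s => [|x r] /= [].
  move=> _ /eqP; lia.
case/and3P => h1 h2 h3 /eqP h4.
exists [seq x :: s | s <- decf f (n.+1 - x) x].
  apply/mapP; exists x => //; rewrite mem_iota; lia.
apply/mapP; exists r => //; rewrite IH; last by lia.
rewrite h3 /=; apply/eqP; lia.
Qed.

Lemma decf_uniq fuel n b : uniq (decf fuel n b).
Proof.
elim: fuel n b => [|f IH] [|n] b //=.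
have : uniq (iota 1 (minn b n.+1)) by exact: iota_uniq.
elim: (iota 1 (minn b n.+1)) => //= M l IHl /andP [hM hl].
rewrite cat_uniq (IHl hl) andbT map_inj_uniq ?IH; last by move=> x y [].
rewrite andTb; apply/hasPn => s /flattenP [l' /mapP [M' hM' ->] /mapP [s' _ ->]].
apply/negP => /mapP [s'' _ [e _]]; move: hM; by rewrite -e hM'.
Qed.

Lemma decf_fuel f1 f2 n b : n <= f1 -> n <= f2 -> decf f1 n b = decf f2 n b.
Proof.
elim: f1 f2 n b => [|f1 IH] [|f2] [|n] b //= h1 h2; try lia.
congr flatten; apply/eq_in_map => M; rewrite mem_iota => hM.
rewrite (IH f2) //; lia.
Qed.

Local Close Scope ring_scope.

Lemma count_parts_sum n (f : {ffun 'I_n -> 'I_n.+1}) v :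
  count_mem v (parts_of f) = \sum_(j < n) (j.+1 == v) * f j.
Proof.
rewrite /parts_of count_flatten -map_comp sumnE big_map big_enum /=.
by apply: eq_bigr => j _; rewrite count_nseq.
Qed.

Lemma count_parts_i n (f : {ffun 'I_n -> 'I_n.+1}) (i : 'I_n) :
  count_mem i.+1 (parts_of f) = f i.
Proof.
rewrite count_parts_sum (bigD1 i) //= eqxx mul1n big1 ?addn0 // => j hj.
rewrite eqSS; case: eqP => // /ord_inj e; by rewrite e eqxx in hj.
Qed.

Lemma count_parts_out n (f : {ffun 'I_n -> 'I_n.+1}) v :
  ~~ (0 < v <= n) -> count_mem v (parts_of f) = 0.
Proof.
move=> hv; rewrite count_parts_sum big1 // => j _.
have := ltn_ord j; case: eqP => [e|] //; move: hv; rewrite -e; lia.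
Qed.

Lemma parts_pos n (f : {ffun 'I_n -> 'I_n.+1}) : all (fun x => 0 < x) (parts_of f).
Proof.
apply/allP => x /flattenP [l /mapP [i _ ->]]; rewrite mem_nseq => /andP [_ /eqP ->] //.
Qed.

Lemma size_le_sumn (s : seq nat) : all (fun x => 0 < x) s -> size s <= sumn s.
Proof. elim: s => //= x r IH /andP [h /IH]; lia. Qed.

Definition gs n (f : {ffun 'I_n -> 'I_n.+1}) := sort geq (parts_of f).

Lemma gs_inj n : injective (@gs n).
Proof.
move=> f1 f2 e.
have hp : perm_eq (parts_of f1) (parts_of f2).
  have h1 : perm_eq (parts_of f1) (gs f1) by rewrite perm_sym; exact: permEl (perm_sort geq _).
  have h2 : perm_eq (gs f2) (parts_of f2) by exact: permEl (perm_sort geq _).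
  rewrite e in h1; exact: perm_trans h1 h2.
apply/ffunP => i; apply/val_inj; rewrite /= -!count_parts_i.
exact: (permP hp).
Qed.

Lemma t_count n : t n = count (fun s => `[< feasible_partition n s >]) (decf n n n).
Proof.
set A := [set f : {ffun 'I_n -> 'I_n.+1} | `[< feasible_partition n (parts_of f) >]].
have -> : t n = #|A| by [].
rewrite cardE -(size_map (@gs n)) -size_filter.
apply: perm_size; apply: uniq_perm.
- rewrite map_inj_uniq ?enum_uniq //; exact: gs_inj.
- rewrite filter_uniq //; exact: decf_uniq.
move=> s; apply/mapP/idP.
  case=> f; rewrite mem_enum inE => /asboolP hf ->.
  have hf' := hf; case: hf' => /WP_weighing [hs ha _] _.
  have hp := permEl (perm_sort geq (parts_of f)).
  rewrite mem_filter; apply/andP; split.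
    apply/asboolP; apply: feas_perm hf; by rewrite perm_sym.
  rewrite decf_spec // sort_Dec //=; by rewrite (perm_sumn hp) hs.
rewrite mem_filter => /andP [/asboolP hP]; rewrite decf_spec // => /andP [hd /eqP hs].
have hpos := Dec_pos hd.
have hsz : size s <= n by rewrite -hs; exact: size_le_sumn.
pose f := [ffun i : 'I_n => (inord (count_mem i.+1 s) : 'I_n.+1)].
have hp : perm_eq (parts_of f) s.
  apply/allP => v _ /=; apply/eqP.
  case: (boolP (0 < v <= n)) => hv.
    have hi : v.-1 < n by lia.
    have -> : v = (Ordinal hi).+1 by rewrite /=; lia.
    rewrite count_parts_i ffunE inordK //.
    have := count_size (pred1 (Ordinal hi).+1) s; lia.
  rewrite count_parts_out //; apply/esym/count_memPn; apply/negP => hvs.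
  have := Dec_le hd hvs; have := allP hpos _ hvs; move: hv; lia.
exists f.
  rewrite mem_enum inE; apply/asboolP; apply: feas_perm hP; by rewrite perm_sym.
apply: (sorted_eq geq_trans geq_anti).
- move: hd; rewrite Dec_path => /andP [/path_sorted h _] //.
- exact: sort_sorted geq_tot _.
- have h1 : perm_eq (sort geq s) s by exact: permEl (perm_sort geq _).
  have h2 : perm_eq (sort geq (parts_of f)) (parts_of f) by exact: permEl (perm_sort geq _).
  rewrite perm_sym; exact: perm_trans h2 hp.
Qed.

Local Close Scope ring_scope.

Definition F k n b := count (fun s => Srt s && (size s == k)) (decf n n b).

Lemma F_t n k : rng n k -> t n = F k n n.
Proof.
move=> hr; rewrite t_count /F; apply: eq_in_count => s.
rewrite decf_spec // => /andP [hd /eqP hs].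
apply/idP/idP => [/asboolP/(feas_iff hr hd hs) //|/(feas_iff hr hd hs) h]; exact/asboolP.
Qed.

Lemma F0 n b : F 0 n b = (n == 0).
Proof.
case: n => [|n] //; rewrite /F (eq_in_count (a2 := pred0)) ?count_pred0 // => s.
rewrite decf_spec // => /andP [_ /eqP]; case: s => //= x r _; by rewrite andbF.
Qed.

Lemma FS0 k b : F k.+1 0 b = 0.
Proof. by []. Qed.

Lemma F_big k n b : n <= b -> F k n b = F k n n.
Proof. case: n => [|n] // h; by rewrite /F /= minnn (minn_idPr h). Qed.

Lemma F_rec k n b : 0 < n ->
  F k.+1 n b = \sum_(1 <= M < (minn b n).+1) (M <= 2 * (n - M) + 1) * F k (n - M) M.
Proof.
case: n => [|n] // _; rewrite /F /= count_flatten -map_comp sumnE big_map.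
have -> : iota 1 (minn b n.+1) = index_iota 1 (minn b n.+1).+1 by rewrite /index_iota subSS subn0.
apply: eq_big_nat => M hM /=.
rewrite count_map (decf_fuel (f2 := n.+1 - M)); try lia.
case: (boolP (M <= 2 * (n.+1 - M) + 1)) => hc.
  rewrite mul1n; apply: eq_in_count => s; rewrite decf_spec // => /andP [_ /eqP hs] /=.
  by rewrite hs hc andbT eqSS.
rewrite mul0n (eq_in_count (a2 := pred0)) ?count_pred0 // => s.
rewrite decf_spec // => /andP [_ /eqP hs] /=; rewrite hs (negbTE hc); by rewrite andbF.
Qed.

Lemma F_nz k n b : 0 < F k n b -> 2 * n + 1 <= 3 ^ k.
Proof.
rewrite /F -has_count => /hasP [s]; rewrite decf_spec // => /andP [_ /eqP hs] /andP [hS /eqP hk].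
by have := Srt_bound hS; rewrite hs hk.
Qed.

Lemma F_z k n b : 3 ^ k < 2 * n + 1 -> F k n b = 0.
Proof.
move=> h; case: (posnP (F k n b)) => // /F_nz; move: (3 ^ k) h => e; lia.
Qed.

Lemma F_split k n b : b <= n -> 0 < n ->
  F k.+1 n n = F k.+1 n b + \sum_(b.+1 <= M < n.+1) (M <= 2 * (n - M) + 1) * F k (n - M) M.
Proof.
move=> hb hn; rewrite !F_rec // minnn (minn_idPl hb) (big_cat_nat _ (n := b.+1)) //.
Qed.

Lemma F_head k n b : 2 * n + 1 < 3 * (b + 1) -> F k n b = F k n n.
Proof.
move=> h; case: (leqP n b) => hnb; first exact: F_big.
case: k => [|k]; first by rewrite !F0.
rewrite (F_split k (ltnW hnb)); last by lia.
rewrite big1_seq ?addn0 // => M /andP [_]; rewrite mem_index_iota => hM.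
have -> : (M <= 2 * (n - M) + 1) = false by apply/negbTE; lia.
by [].
Qed.

Lemma F_tail k n b : 3 ^ k < 2 * (n - b) + 1 -> F k.+1 n b = 0.
Proof.
move=> h; case: (leqP n b) => hnb.
  have h3 : 0 < 3 ^ k by rewrite expn_gt0.
  move: h h3; have -> : n - b = 0 by lia. move: (3 ^ k) => e; lia.
rewrite F_rec; last by lia.
rewrite big1_seq // => M /andP [_]; rewrite mem_index_iota => hM.
rewrite F_z ?muln0 //; move: (3 ^ k) h => e; lia.
Qed.

Local Close Scope ring_scope.

Lemma reidx b R (H : nat -> nat) : b <= R ->
  \sum_(b.+1 <= M < R.+1) H M = \sum_(0 <= S < R - b) H (R - S).
Proof.
move=> hb; rewrite big_nat_rev -{1}(add0n b.+1) big_addn subSS.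
apply: eq_big_nat => i hi; congr H; lia.
Qed.

Lemma restrict lo a b hi (f : nat -> nat) : lo <= a -> a <= b -> b <= hi ->
  (forall i, lo <= i < a -> f i = 0) -> (forall i, b <= i < hi -> f i = 0) ->
  \sum_(lo <= i < hi) f i = \sum_(a <= i < b) f i.
Proof.
move=> h1 h2 h3 z1 z2.
have ha : a <= hi by exact: leq_trans h2 h3.
rewrite (big_cat_nat h1 ha) (big_cat_nat h2 h3).
rewrite [\sum_(lo <= i < a) _]big1_seq; last by move=> i /andP [_]; rewrite mem_index_iota; exact: z1.
rewrite [\sum_(b <= i < hi) _]big1_seq; last by move=> i /andP [_]; rewrite mem_index_iota; exact: z2.
by rewrite !Monoid.simpm.
Qed.

Lemma zero_below a d b (f : nat -> nat) : a <= d -> (forall i, i < d -> f i = 0) ->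
  \sum_(a <= i < b) f i = \sum_(d <= i < b) f i.
Proof.
move=> h z; case: (leqP d b) => hdb.
  rewrite (big_cat_nat h hdb) big1_seq ?add0n // => i /andP [_].
  rewrite mem_index_iota => hi; apply: z; lia.
rewrite (big_geq (m := d)) ?(ltnW hdb) // big1_seq // => i /andP [_].
rewrite mem_index_iota => hi; apply: z; lia.
Qed.

Lemma p_odd m' : (3 ^ m') %% 2 = 1.
Proof. by rewrite modn2 oddX orbT. Qed.

Definition inner n R := \sum_((R + 1) %/ 3 <= S < 2 * R - n) t S.

Lemma key_n m' n : 3 * 3 ^ m' + 1 <= 2 * n -> 2 * n + 1 <= 9 * 3 ^ m' ->
  t n = \sum_((n + 1) %/ 3 <= R < ((3 * 3 ^ m') %/ 2).+1) F m'.+1 R (n - R).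
Proof.
have hp0 : 0 < 3 ^ m' by rewrite expn_gt0.
have hpo := p_odd m'.
move: (erefl (3 ^ m')) => e.
move=> h1 h2.
have hr : rng n m'.+2 by rewrite /rng !expnS; move: (3 ^ m') h1 h2 hp0 => p; lia.
rewrite (F_t hr) F_rec; last by lia.
rewrite minnn reidx // subn0.
have e3 : 3 ^ m'.+1 = 3 * 3 ^ m' by rewrite expnS.
rewrite (restrict (a := (n + 1) %/ 3) (b := ((3 * 3 ^ m') %/ 2).+1)).
- apply: eq_big_nat => R hR; have -> : n - (n - R) = R by lia.
  have -> : (n - R <= 2 * R + 1) = true by apply/idP; lia.
  by rewrite mul1n.
- lia.
- move: (3 ^ m') h1 h2 hp0 hpo => p; lia.
- move: (3 ^ m') h1 h2 hp0 hpo => p; lia.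
- move=> R hR; have -> : (n - R <= 2 * (n - (n - R)) + 1) = false by apply/negbTE; lia.
  by [].
- move=> R hR; rewrite F_z ?muln0 // e3; move: (3 ^ m') h1 h2 hp0 hpo hR => p; lia.
Qed.

Local Close Scope ring_scope.

Lemma tR m' R : 3 ^ m'.+1 < 3 * (2 * R + 1) -> 2 * R + 1 <= 3 ^ m'.+1 -> t R = F m'.+1 R R.
Proof. by move=> h1 h2; apply: F_t; rewrite /rng h1 h2. Qed.

Lemma case2 m' n : 5 * 3 ^ m' + 3 <= 2 * n -> 2 * n + 1 <= 9 * 3 ^ m' ->
  t n = \sum_((n + 1) %/ 3 <= R < ((3 * 3 ^ m') %/ 2).+1) t R.
Proof.
have hp0 : 0 < 3 ^ m' by rewrite expn_gt0.
have hpo := p_odd m'.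
have e3 : 3 ^ m'.+1 = 3 * 3 ^ m' by rewrite expnS.
move=> h1 h2; rewrite (key_n (m' := m')); try lia.
apply: eq_big_nat => R hR.
rewrite F_head; last by move: (3 ^ m') h1 h2 hp0 hpo hR => p; lia.
rewrite (tR (m' := m')) // e3; move: (3 ^ m') h1 h2 hp0 hpo hR => p; lia.
Qed.

Lemma case1_inner m' n R : 3 * 3 ^ m' + 1 <= 2 * n -> 2 * n <= 5 * 3 ^ m' + 1 ->
  (n + 1) %/ 3 <= R < ((2 * n + 3 ^ m' - 1) %/ 4).+1 ->
  F m'.+1 R (n - R) + inner n R = t R.
Proof.
have hp0 : 0 < 3 ^ m' by rewrite expn_gt0.
have hpo := p_odd m'.
have e3 : 3 ^ m'.+1 = 3 * 3 ^ m' by rewrite expnS.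
move=> h1 h2 hR.
rewrite (tR (m' := m')); last first.
  rewrite e3; move: (3 ^ m') h1 h2 hp0 hpo hR => p; lia.
  rewrite e3; move: (3 ^ m') h1 h2 hp0 hpo hR => p; lia.
case: (ltnP (5 * R) (3 * n + 2)) => h5.
  rewrite /inner big_geq ?addn0; last by lia.
  apply: F_head; lia.
have hRn : n - R <= R by lia.
rewrite (@F_split m' R (n - R) hRn); last by lia.
congr (_ + _); rewrite reidx //.
have -> : R - (n - R) = 2 * R - n by lia.
rewrite /inner (restrict (a := (R + 1) %/ 3) (b := 2 * R - n)).
- apply: eq_big_nat => S hS.
  have -> : R - (R - S) = S by lia.
  have -> : (R - S <= 2 * S + 1) = true by apply/idP; lia.
  rewrite mul1n F_big; last by move: (3 ^ m') h1 h2 hp0 hpo hR hS => p; lia.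
  case: m' hp0 hpo e3 h1 h2 hR hS => [|m'] hp0 hpo e3 h1 h2 hR hS.
    move: h1 h2 hR hS; rewrite expn0; lia.
  rewrite (tR (m' := m')) //.
    have e4 : 3 ^ m'.+1 = 3 * 3 ^ m' by rewrite expnS.
    rewrite e4; rewrite e4 in h1 h2 hR hS hp0 hpo.
    move: (3 ^ m') h1 h2 hR hS hp0 hpo => p; lia.
  move: (3 ^ m'.+1) h1 h2 hR hS hp0 hpo => p; lia.
- lia.
- lia.
- lia.
- move=> S hS; have -> : (R - S <= 2 * (R - (R - S)) + 1) = false by apply/negbTE; lia.
  by [].
- by move=> S; lia.
Qed.

Lemma case1 m' n : 3 * 3 ^ m' + 1 <= 2 * n -> 2 * n <= 5 * 3 ^ m' + 1 ->
  t n + \sum_((3 * n + 6) %/ 5 <= R < ((2 * n + 3 ^ m' - 1) %/ 4).+1) inner n R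
  = \sum_((n + 1) %/ 3 <= R < ((2 * n + 3 ^ m' - 1) %/ 4).+1) t R.
Proof.
have hp0 : 0 < 3 ^ m' by rewrite expn_gt0.
have hpo := p_odd m'.
move=> h1 h2.
rewrite (key_n (m' := m')); try lia.
rewrite (restrict (a := (n + 1) %/ 3) (b := ((2 * n + 3 ^ m' - 1) %/ 4).+1)).
- have hz : \sum_((3 * n + 6) %/ 5 <= R < ((2 * n + 3 ^ m' - 1) %/ 4).+1) inner n R
      = \sum_((n + 1) %/ 3 <= R < ((2 * n + 3 ^ m' - 1) %/ 4).+1) inner n R.
    rewrite (zero_below (a := (n + 1) %/ 3) (d := (3 * n + 6) %/ 5)) //; first lia.
    move=> R hR; rewrite /inner big_geq //; lia.
  rewrite hz -big_split /=; apply: eq_big_nat => R hR; exact: case1_inner.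
- lia.
- move: (3 ^ m') h1 h2 hp0 hpo => p; lia.
- move: (3 ^ m') h1 h2 hp0 hpo => p; lia.
- move=> R; lia.
- move=> R hR; apply: F_tail; move: (3 ^ m') h1 h2 hp0 hpo hR => p; lia.
Qed.

Local Open Scope ring_scope.

Lemma sumZ_nat (a b : nat) G : sumZ a%:Z b%:Z G = (\sum_(a <= k < b.+1) G k)%N.
Proof.
rewrite /sumZ /= big_mkcond /=.
case: (leqP a b.+1) => hab.
  have z1 : forall k, (0 <= k < a)%N -> (if (a%:Z <= k%:Z) && (k%:Z <= b%:Z) then G k else 0%N) = 0%N.
    move=> k hk; rewrite !lez_nat; have -> : ((a <= k)%N && (k <= b)%N) = false by lia.
    by [].
  have z2 : forall k, (b.+1 <= k < b.+1)%N -> (if (a%:Z <= k%:Z) && (k%:Z <= b%:Z) then G k else 0%N) = 0%N.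
    by move=> k /andP [h1 h2]; lia.
  rewrite (restrict (leq0n a) hab (leqnn _) z1 z2).
  apply: eq_big_nat => k hk; rewrite !lez_nat; have -> : ((a <= k)%N && (k <= b)%N) = true by lia.
  by [].
rewrite [RHS]big_geq; last by lia.
rewrite big1_seq // => k /andP [_]; rewrite mem_index_iota => hk.
rewrite !lez_nat; have -> : ((a <= k)%N && (k <= b)%N) = false by lia.
by [].
Qed.

Lemma sumZ_neg (a b : int) G : b < 0 -> sumZ a b G = 0%N.
Proof.
move=> hb; rewrite /sumZ big1_seq // => k /andP [/andP [_ h] _]; move: h hb; lia.
Qed.

Lemma ceilQ (u : int) (d : nat) (k : int) (x : rat) : (0 < d)%N -> x * d%:R = u%:~R ->
  ((k-1)*d%:Z < u <= k * d%:Z) -> Num.ceil x = k.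
Proof.
move=> d0 hx /andP[h1 h2]; apply: Num.Theory.ceil_def.
have dp : 0 < d%:R :> rat by rewrite ltr0n.
have h1' : ((k-1)*d%:Z)%:~R < u%:~R :> rat by rewrite ltr_int.
have h2' : u%:~R <= (k * d%:Z)%:~R :> rat by rewrite ler_int.
rewrite intrM in h1' h2'. rewrite -hx in h1' h2'.
rewrite -[d%:Z%:~R]pmulrn in h1' h2'.
apply/andP; split; nra.
Qed.

Lemma floorQ (u : int) (d : nat) (k : int) (x : rat) : (0 < d)%N -> x * d%:R = u%:~R ->
  (k*d%:Z <= u < (k+1) * d%:Z) -> Num.floor x = k.
Proof.
move=> d0 hx /andP[h1 h2]; apply: Num.Theory.floor_def.
have dp : 0 < d%:R :> rat by rewrite ltr0n.
have h1' : (k*d%:Z)%:~R <= u%:~R :> rat by rewrite ler_int.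
have h2' : u%:~R < ((k+1) * d%:Z)%:~R :> rat by rewrite ltr_int.
rewrite intrM in h1' h2'. rewrite -hx in h1' h2'.
rewrite -[d%:Z%:~R]pmulrn in h1' h2'.
apply/andP; split; nra.
Qed.

Lemma leQn (x y : nat) : (x%:R <= y%:R :> rat) -> (x <= y)%N.
Proof. by rewrite ler_nat. Qed.

Lemma inner_eq (n R : nat) :
  sumZ (Num.ceil ((R%:Q - 1) / 3)) (2 * R%:Z - n%:Z - 1) t = inner n R.
Proof.
have -> : Num.ceil ((R%:Q - 1) / 3) = ((R + 1) %/ 3)%N%:Z.
  apply: (ceilQ (u := R%:Z - 1) (d := 3)) => //; last by apply/andP; split; lia.
  by rewrite divfK // intrB.
case: (leqP (n + 1) (2 * R)) => h.
  have -> : 2 * R%:Z - n%:Z - 1 = (2 * R - n - 1)%N%:Z by lia.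
  rewrite sumZ_nat /inner; congr bigop; congr index_iota; lia.
rewrite sumZ_neg; last by lia.
rewrite /inner big_geq //; lia.
Qed.

Unset Implicit Arguments.
Local Open Scope ring_scope.

Theorem theorem6 (m : nat) : (0 < m)%N ->
  let A : rat := (3%:Q ^+ m.-1 + 1) / 2 in
  let P : rat := 3%:Q ^ (m%:Z - 2) in
  (forall n : nat, A <= n%:Q <= A + P ->
     (t n)%:Z =
       (sumZ (Num.ceil ((n%:Q - 1) / 3)) (Num.floor ((2 * n%:Q + P - 1) / 4)) t)%:Z
       - (sumZ (Num.ceil ((3 * n%:Q + 2) / 5)) (Num.floor ((2 * n%:Q + P - 1) / 4))
            (fun R => sumZ (Num.ceil ((R%:Q - 1) / 3)) (2 * R%:Z - n%:Z - 1) t))%:Z)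
  /\
  (forall n : nat, A + P + 1 <= n%:Q <= (3%:Q ^+ m - 1) / 2 ->
     (t n)%:Z =
       (sumZ (Num.ceil ((n%:Q - 1) / 3)) (Num.floor ((3%:Q ^+ m.-1 - 1) / 2)) t)%:Z).
Proof.
case: m => [|[|m']] // _ A P.
  have hP : P = 1 / 3.
    by rewrite /P (_ : (1%:Z - 2) = - 1%:Z).
  have hA : A = 1 by rewrite /A expr0; lra.
  have t0 : t 0 = 1%N by rewrite (@F_t 0 0) // F0.
  have t1 : t 1 = 1%N by rewrite (@F_t 1 1).
  split.
    move=> n /andP [h1 h2]; rewrite -!pmulrn hA hP in h1 h2.
    have hn1 : (1 <= n)%N by rewrite -(ler_nat rat); lra.
    have hn2 : (n < 2)%N by rewrite -(ltr_nat rat); lra.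
    have -> : n = 1%N by lia.
    have -> : Num.ceil ((1%:Q - 1) / 3) = 0%N%:Z.
      by apply: (ceilQ (u := 0) (d := 3)) => //; rewrite -!pmulrn; field.
    have -> : Num.floor ((2 * 1%:Q + P - 1) / 4) = 0%N%:Z.
      by apply: (floorQ (u := 4) (d := 12)) => //; rewrite hP -!pmulrn; field.
    have -> : Num.ceil ((3 * 1%:Q + 2) / 5) = 1%N%:Z.
      by apply: (ceilQ (u := 5) (d := 5)) => //; rewrite -!pmulrn; field.
    by rewrite !sumZ_nat big_nat1 big_geq // t0 t1.
  move=> n /andP [h1 h2]; rewrite hA hP expr1 in h1 h2.
  have e3 : (3%:~R : rat) = 3 by [].
  rewrite e3 in h2; exfalso; lra.
have [p ep] : exists p, (3 ^ m')%N = p by eexists.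
have hP : P = p%:R.
  rewrite /P (_ : (m'.+2)%:Z - 2 = m'%:Z); last by lia.
  by rewrite -ep natrX -pmulrn.
have hA : A = (3 * p%:R + 1) / 2.
  by rewrite /A /= exprS -ep natrX -pmulrn.
have h3 : 3%:Q ^+ m'.+1 = 3 * p%:R by rewrite exprS -ep natrX -pmulrn.
have h9 : 3%:Q ^+ m'.+2 = 9 * p%:R.
  rewrite exprS h3 mulrA; congr (_ * _); by rewrite -pmulrn.
have hp0 : (0 < p)%N by rewrite -ep expn_gt0.
have hpo : (p %% 2)%N = 1%N by rewrite -ep p_odd.
have ha : forall n : nat, Num.ceil ((n%:Q - 1) / 3) = ((n + 1) %/ 3)%N%:Z.
  move=> n; apply: (ceilQ (u := n%:Z - 1) (d := 3)) => //; last by apply/andP; split; lia.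
  by rewrite divfK // intrB.
split.
  move=> n /andP [hn1 hn2].
  rewrite -!pmulrn hA hP in hn1 hn2.
  have h1 : (3 * p + 1 <= 2 * n)%N by apply: leQn; rewrite natrD !natrM; lra.
  have h2 : (2 * n <= 5 * p + 1)%N by apply: leQn; rewrite natrD !natrM; lra.
  have hV : Num.floor ((2 * n%:Q + P - 1) / 4) = ((2 * n + p - 1) %/ 4)%N%:Z.
    apply: (floorQ (u := 2 * n%:Z + p%:Z - 1) (d := 4)) => //; last by apply/andP; split; lia.
    by rewrite divfK // hP intrB intrD intrM -!pmulrn.
  have hd : Num.ceil ((3 * n%:Q + 2) / 5) = ((3 * n + 6) %/ 5)%N%:Z.
    apply: (ceilQ (u := 3 * n%:Z + 2) (d := 5)) => //; last by apply/andP; split; lia.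
    by rewrite divfK // intrD intrM -!pmulrn.
  rewrite ha hV hd !sumZ_nat.
  rewrite [in X in _ - X](eq_bigr (fun R => inner n R)); last by move=> R _; exact: inner_eq.
  have := case1 (m' := m') (n := n); rewrite ep => hc.
  by rewrite -(hc h1 h2) PoszD addrK.
move=> n /andP [hn1 hn2].
rewrite -!pmulrn hA hP in hn1 hn2.
rewrite h9 in hn2.
have h1 : (5 * p + 3 <= 2 * n)%N by apply: leQn; rewrite natrD !natrM; lra.
have h2 : (2 * n + 1 <= 9 * p)%N by apply: leQn; rewrite natrD !natrM; lra.
have hU : Num.floor ((3%:Q ^+ m'.+2.-1 - 1) / 2) = ((3 * p) %/ 2)%N%:Z.
  apply: (floorQ (u := 3 * p%:Z - 1) (d := 2)) => //; last by apply/andP; split; lia.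
  by rewrite divfK //= h3 intrB intrM -!pmulrn.
rewrite ha hU sumZ_nat; congr Posz.
have := case2 (m' := m') (n := n); rewrite ep => hc; exact: hc.
Qed.
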